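(* Let $\alpha,\beta\in\mathsf{Lab}\uplus\underline{\mathsf{Lab}}$ with $\mathsf{und}(\alpha)=(p_\alpha,Rd_\alpha,Wt_\alpha)$, $\mathsf{und}(\beta)=(p_\beta,Rd_\beta,Wt_\beta)$, $Wt_\alpha\subseteq Rd_\alpha$, $Wt_\beta\subseteq Rd_\beta$ and $\alpha\;\iota_{lab}\;\beta$. Suppose $A\to_{ann}^{\alpha}A'$ and $A\to_{ann}^{\beta}A''$. Then there is an annotation DAG $A'''$ such that $A'\to_{ann}^{\beta}A'''$ and $A''\to_{ann}^{\alpha}A'''$.
   Context: Fix a set $\mathcal{R}$ of memory resources. Let $\mathsf{PID}=(\mathbb{N}_+)^*$ be the set of finite words over the positive integers, with $\preceq$ the prefix order. An annotation DAG is a triple $A=(V,E_R,E_W)$ such that: (1) $V\subseteq(\mathsf{PID}\times\mathbb{N})\cup\{\bot\}$ is finite, $\bot\in V$, and $(p,n)\in V$ implies $(p,n')\in V$ for all $n'\le n$; (2) $E_R,E_W\subseteq V\times\mathcal{R}\times V$, and $(v',r,v),(v'',r,v)\in E_R\cup E_W$ implies $v'=v''$; (3) $E_R\cap E_W=\varnothing$ and the directed graph $(V,E_R\cup E_W)$ is acyclic; (4) if $(v',r,v)\in E_W$ and $v'\neq\bot$ then $(v'',r,v')\in E_W$ for some $v''$; (5) $(v,r,v'),(v,r,v'')\in E_W$ implies $v'=v''$. For $r\in\mathcal{R}$, $\mathsf{last}(r,E_W)$ is $\bot$ if $E_W$ has no edge labelled $r$, and otherwise is the final node of the unique path from $\bot$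 consisting of all $E_W$-edges labelled $r$. For $p\in\mathsf{PID}$, $\mathsf{max}_p(V)=\max\{n:(p,n)\in V\}$, or $-1$ if there is no such $n$. Let $\mathsf{Lab}=\mathsf{PID}\times2^{\mathcal{R}}\times2^{\mathcal{R}}$ and $\underline{\mathsf{Lab}}=\{\underline{a}:a\in\mathsf{Lab}\}$ a disjoint copy; $\mathsf{und}(a)=\mathsf{und}(\underline a)=a$. For $a=(p,Rd,Wt)\in\mathsf{Lab}$ and annotation DAGs $A_1=(V_1,E_{R1},E_{W1})$, $A_2=(V_2,E_{R2},E_{W2})$, write $A_1\to_{ann}^{a}A_2$ iff, with $v=(p,\mathsf{max}_p(V_1)+1)$ and $\mathsf{newedge}(r,E_W,v)=(\mathsf{last}(r,E_W),r,v)$: $V_2=V_1\cup\{v\}$, $E_{R2}=E_{R1}\cup\{\mathsf{newedge}(r,E_{W1},v): r\in Rd\setminus Wt\}$, $E_{W2}=E_{W1}\cup\{\mathsf{newedge}(r,E_{W1},v): r\in Wt\}$; and write $A_2\to_{ann}^{\underline a}A_1$ iff $A_1\to_{ann}^{a}A_2$. For $\alpha,\beta\in\mathsf{Lab}\uplus\underline{\mathsf{Lab}}$ with $\mathsf{und}(\alpha)=(p_1,Rd_1,Wt_1)$, $\mathsf{und}(\beta)=(p_2,Rd_2,Wt_2)$, define $\alpha\;\iota_{lab}\;\beta$ iff $p_1\not\preceq p_2$, $p_2\not\preceq p_1$, $Rd_1\cap Wt_2=\varnothing$ and $Rd_2\cap Wt_1=\varnothing$. (In the paper, labels arise from basic blocks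 for which the set of written resources is contained in the set of read resources; this is recorded here as the hypothesis $Wt\subseteq Rd$.) *)

(* Defs.v *)
From mathcomp Require Import all_boot.
From Stdlib Require Import Relations.Relation_Operators.
Set Implicit Arguments. Unset Strict Implicit. Unset Printing Implicit Defensive.

(* PID = finite words over positive integers; represented by seq nat,
   membership in PID is [is_pid]. Prefix order = seq's [prefix]. *)
Definition pid := seq nat.
Definition is_pid (p : pid) : Prop := all (fun k => 0 < k) p.

(* Nodes: None = bot, Some (p, n) = (p, n). *)
Definition node := option (pid * nat).

Section Ann.
Variable R : Type. (* the set of memory resources *)

Record annDAG := AnnDAG {
  V  : node -> Prop;
  ER : node -> R -> node -> Prop;
  EW : node -> R -> node -> Prop }.

Definition edge (A : annDAG) (x y : node) : Prop :=
  exists r, ER A x r y \/ EW A x r y.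

Definition is_annDAG (A : annDAG) : Prop :=
  (exists s : seq node, forall v, V A v -> v \in s) /\
  V A None /\
  (forall p n, V A (Some (p, n)) -> is_pid p) /\
  (forall p n n', V A (Some (p, n)) -> n' <= n -> V A (Some (p, n'))) /\
  (forall x r y, ER A x r y \/ EW A x r y -> V A x /\ V A y) /\
  (forall v' v'' r v, (ER A v' r v \/ EW A v' r v) -> (ER A v'' r v \/ EW A v'' r v) ->
     v' = v'') /\
  (forall x r y, ~ (ER A x r y /\ EW A x r y)) /\
  (forall x, ~ clos_trans node (edge A) x x) /\
  (forall v' r v, EW A v' r v -> v' <> None -> exists v'', EW A v'' r v') /\
  (forall v r v' v'', EW A v r v' -> EW A v r v'' -> v' = v'').

Fixpoint consec (s : seq node) (a b : node) : Prop :=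
  match s with
  | x :: ((y :: _) as t) => (a = x /\ b = y) \/ consec t a b
  | _ => False
  end.

(* [is_last EW r v] : v = last(r, EW), i.e. v is the final node of the path
   bot = v0, v1, ..., vk whose edges are exactly the EW-edges labelled r
   (k = 0, v = bot, when there is no such edge). *)
Definition is_last (E : node -> R -> node -> Prop) (r : R) (v : node) : Prop :=
  exists s : seq node, last None s = v /\
    forall x y, E x r y <-> consec (None :: s) x y.

(* [new_index V p n] : n = max_p(V) + 1 *)
Definition new_index (X : node -> Prop) (p : pid) (n : nat) : Prop :=
  (n = 0 /\ forall k, ~ X (Some (p, k))) \/
  (exists m, n = m.+1 /\ X (Some (p, m)) /\ forall k, X (Some (p, k)) -> k <= m).

Record lab := Lab { lpid : pid; lRd : R -> Prop; lWt : R -> Prop }.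

Definition ann_step (a : lab) (A1 A2 : annDAG) : Prop :=
  is_annDAG A1 /\ is_annDAG A2 /\
  exists n, new_index (V A1) (lpid a) n /\
    let v := Some (lpid a, n) in
    (forall x, V A2 x <-> V A1 x \/ x = v) /\
    (forall x r y, ER A2 x r y <->
       ER A1 x r y \/ (y = v /\ lRd a r /\ ~ lWt a r /\ is_last (EW A1) r x)) /\
    (forall x r y, EW A2 x r y <->
       EW A1 x r y \/ (y = v /\ lWt a r /\ is_last (EW A1) r x)).

Inductive glab := Fwd of lab | Bwd of lab.

Definition und (g : glab) : lab := match g with Fwd a => a | Bwd a => a end.

Definition gstep (g : glab) (A1 A2 : annDAG) : Prop :=
  match g with Fwd a => ann_step a A1 A2 | Bwd a => ann_step a A2 A1 end.

Definition iota_lab (g1 g2 : glab) : Prop :=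
  ~ prefix (lpid (und g1)) (lpid (und g2)) /\
  ~ prefix (lpid (und g2)) (lpid (und g1)) /\
  (forall r, ~ (lRd (und g1) r /\ lWt (und g2) r)) /\
  (forall r, ~ (lRd (und g2) r /\ lWt (und g1) r)).

End Ann.

(* Main.v *)
Require Import Defs.
From mathcomp Require Import all_boot.
From Stdlib Require Import Relations.Relation_Operators Setoid.

Section S.
Variable R : Type.

Definition stepn (a : lab R) (n : nat) (A1 A2 : annDAG R) : Prop :=
  is_annDAG A1 /\ is_annDAG A2 /\ new_index (V A1) (lpid a) n /\
  (forall x, V A2 x <-> V A1 x \/ x = Some (lpid a, n)) /\
  (forall x r y, ER A2 x r y <-> ER A1 x r y \/
      (y = Some (lpid a, n) /\ lRd a r /\ ~ lWt a r /\ is_last (EW A1) r x)) /\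
  (forall x r y, EW A2 x r y <-> EW A1 x r y \/
      (y = Some (lpid a, n) /\ lWt a r /\ is_last (EW A1) r x)).

Lemma stepnP a A1 A2 : ann_step a A1 A2 <-> exists n, stepn a n A1 A2.
Proof.
rewrite /ann_step /stepn; split.
  move=> [h1 [h2 [n [h3 h]]]]; exists n; cbv zeta in h; tauto.
move=> [n h]; split; [tauto|split; [tauto|exists n; cbv zeta; tauto]].
Qed.

Lemma ad_fin {A : annDAG R} : is_annDAG A -> exists s : seq node, forall v, V A v -> v \in s.
Proof. by case. Qed.
Lemma ad_None {A : annDAG R} : is_annDAG A -> V A None.
Proof. by case=> _ []. Qed.
Lemma ad_pid {A : annDAG R} : is_annDAG A -> forall p n, V A (Some (p, n)) -> is_pid p.
Proof. by case=> _ [_ []]. Qed.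
Lemma ad_dc {A : annDAG R} : is_annDAG A -> forall p n n', V A (Some (p, n)) -> n' <= n -> V A (Some (p, n')).
Proof. by case=> _ [_ [_ []]]. Qed.
Lemma ad_end {A : annDAG R} : is_annDAG A -> forall x r y, ER A x r y \/ EW A x r y -> V A x /\ V A y.
Proof. by case=> _ [_ [_ [_ []]]]. Qed.
Lemma ad_uniq {A : annDAG R} : is_annDAG A -> forall v' v'' r v, (ER A v' r v \/ EW A v' r v) -> (ER A v'' r v \/ EW A v'' r v) -> v' = v''.
Proof. by case=> _ [_ [_ [_ [_ []]]]]. Qed.
Lemma ad_disj {A : annDAG R} : is_annDAG A -> forall x r y, ~ (ER A x r y /\ EW A x r y).
Proof. by case=> _ [_ [_ [_ [_ [_ []]]]]]. Qed.
Lemma ad_acyc {A : annDAG R} : is_annDAG A -> forall x, ~ clos_trans node (edge A) x x.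
Proof. by case=> _ [_ [_ [_ [_ [_ [_ []]]]]]]. Qed.
Lemma ad_4 {A : annDAG R} : is_annDAG A -> forall v' r v, EW A v' r v -> v' <> None -> exists v'', EW A v'' r v'.
Proof. by case=> _ [_ [_ [_ [_ [_ [_ [_ []]]]]]]]. Qed.
Lemma ad_5 {A : annDAG R} : is_annDAG A -> forall v r v' v'', EW A v r v' -> EW A v r v'' -> v' = v''.
Proof. by case=> _ [_ [_ [_ [_ [_ [_ [_ []]]]]]]]. Qed.

Lemma ct_mono (E1 E2 : node -> node -> Prop) : (forall x y, E1 x y -> E2 x y) ->
  forall x y, clos_trans node E1 x y -> clos_trans node E2 x y.
Proof.
move=> H x y; elim=> [a b /H|a b c _ IH1 _ IH2]; first by constructor.
exact: t_trans IH1 IH2.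
Qed.

Lemma ct_first (E : node -> node -> Prop) x y : clos_trans node E x y -> exists z, E x z.
Proof. by elim=> [a b h|a b c _ IH _ _]; [exists b|]. Qed.

Arguments ct_first {E x y}.

Lemma fresh (X : node -> Prop) p n : new_index X p n -> ~ X (Some (p, n)).
Proof. by case=> [[-> H]|[m [-> [_ H]]]]; [apply: H | move/H; rewrite ltnn]. Qed.

Lemma new_index_ext (X Y : node -> Prop) p n :
  (forall k, X (Some (p, k)) <-> Y (Some (p, k))) -> new_index X p n -> new_index Y p n.
Proof.
move=> E [[-> H]|[m [-> [h H]]]].
  by left; split=> // k /E /H.
by right; exists m; split=> //; split; [apply/E|move=> k /E /H].
Qed.

Lemma is_last_ext (E1 E2 : node -> R -> node -> Prop) r v :
  (forall x y, E1 x r y <-> E2 x r y) -> is_last E1 r v -> is_last E2 r v.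
Proof.
move=> H [s [h1 h2]]; exists s; split=> // x y; split; [by move/H/h2|by move/h2/H].
Qed.

Lemma consec_last (a x : node) s : consec (a :: rcons s x) (last a s) x.
Proof.
elim: s a => [|b s IH] a /=; first by left.
by right; apply: IH.
Qed.

Lemma is_last_src (E : node -> R -> node -> Prop) r x :
  is_last E r x -> x = None \/ exists z, E z r x.
Proof.
move=> [s [h1 h2]]; case/lastP: s h1 h2 => [|s y]; first by left.
rewrite last_rcons => -> h2; right; exists (last None s); apply/h2.
exact: consec_last.
Qed.


Section Step.
Context {a : lab R} {n : nat} {A1 A2 : annDAG R}.
Hypothesis st : stepn a n A1 A2.
Let v : node := Some (lpid a, n).

Lemma st_ad1 : is_annDAG A1. Proof. by case: st. Qed.
Lemma st_ad2 : is_annDAG A2. Proof. by case: st => _ []. Qed.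
Lemma st_ni : new_index (V A1) (lpid a) n. Proof. by case: st => _ [_ []]. Qed.
Lemma st_V x : V A2 x <-> V A1 x \/ x = v. Proof. by case: st => _ [_ [_ []]]. Qed.
Lemma st_ER x r y : ER A2 x r y <-> ER A1 x r y \/
      (y = v /\ lRd a r /\ ~ lWt a r /\ is_last (EW A1) r x).
Proof. by case: st => _ [_ [_ [_ []]]]. Qed.
Lemma st_EW x r y : EW A2 x r y <-> EW A1 x r y \/
      (y = v /\ lWt a r /\ is_last (EW A1) r x).
Proof. by case: st => _ [_ [_ [_ []]]]. Qed.

Lemma st_fresh : ~ V A1 v. Proof. exact: fresh st_ni. Qed.
Lemma st_EWkeep r x y : ~ lWt a r -> (EW A2 x r y <-> EW A1 x r y).
Proof. move=> h; rewrite st_EW; tauto. Qed.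
Lemma st_ER_old x r y : ER A1 x r y -> ER A2 x r y.
Proof. by move=> h; apply/st_ER; left. Qed.
Lemma st_EW_old x r y : EW A1 x r y -> EW A2 x r y.
Proof. by move=> h; apply/st_EW; left. Qed.
Lemma st_V_old x : V A1 x -> V A2 x.
Proof. by move=> h; apply/st_V; left. Qed.
Lemma st_V_new : V A2 v.
Proof. by apply/st_V; right. Qed.
Lemma st_Vpid p k : p <> lpid a -> (V A2 (Some (p, k)) <-> V A1 (Some (p, k))).
Proof. move=> hp; rewrite st_V; split; last by left.
case=> // e; exfalso; apply: hp; by case: e.
Qed.

Lemma st_E_back0 x r y : (ER A2 x r y \/ EW A2 x r y) ->
  (ER A1 x r y \/ EW A1 x r y) \/ y = v.
Proof. by case=> [/st_ER|/st_EW]; intuition. Qed.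

Lemma st_no_out y : edge A2 v y -> False.
Proof.
move=> e; have acy := ad_acyc st_ad2 v.
case: (e) => r hr; case: (st_E_back0 _ _ _ hr) => [h|ey].
- by have [] := ad_end st_ad1 _ _ _ h; move/st_fresh.
- by subst y; apply: acy; apply: t_step.
Qed.

Lemma st_src_old z y : edge A2 z y -> V A1 z.
Proof.
move=> e; case: (e) => r hr; have [/st_V [//|ez] _] := ad_end st_ad2 _ _ _ hr.
by subst z; case: (st_no_out _ e).
Qed.

Lemma st_E_back x r y : (ER A2 x r y \/ EW A2 x r y) ->
  (ER A1 x r y \/ EW A1 x r y) \/ y = v.
Proof. by case=> [/st_ER|/st_EW]; intuition. Qed.

Lemma st_E_old x r y : (ER A1 x r y \/ EW A1 x r y) -> (ER A2 x r y \/ EW A2 x r y).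
Proof. by case=> h; [left; apply: st_ER_old | right; apply: st_EW_old]. Qed.

Lemma st_tgt_old x y : edge A2 x y -> y <> v -> edge A1 x y.
Proof.
move=> [r hr] hy; exists r; by case: (st_E_back _ _ _ hr).
Qed.

Lemma st_edge_old x y : edge A1 x y -> edge A2 x y.
Proof. by move=> [r hr]; exists r; apply: st_E_old. Qed.

End Step.
Arguments st_V_old {a n A1 A2} st {x}.
Arguments st_ER_old {a n A1 A2} st {x r y}.
Arguments st_EW_old {a n A1 A2} st {x r y}.
Arguments st_tgt_old {a n A1 A2} st {x y}.
Arguments st_src_old {a n A1 A2} st {z y}.

Lemma last_keep (a : lab R) (n : nat) (A1 A2 : annDAG R) (r : R) (x : node) : stepn a n A1 A2 -> ~ lWt a r ->
  (is_last (EW A1) r x <-> is_last (EW A2) r x).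
Proof.
move=> st h; split; apply: is_last_ext => x' y'; rewrite (st_EWkeep st) //.
Qed.

Definition union (A1 A2 : annDAG R) : annDAG R :=
  AnnDAG (fun x => V A1 x \/ V A2 x) (fun x r y => ER A1 x r y \/ ER A2 x r y)
         (fun x r y => EW A1 x r y \/ EW A2 x r y).

Section FF.
Context {a b : lab R} {na nb : nat} {A A' A'' : annDAG R}.
Hypothesis hp : lpid a <> lpid b.
Hypothesis hab : forall r, lRd a r -> ~ lWt b r.
Hypothesis hba : forall r, lRd b r -> ~ lWt a r.
Hypothesis wa : forall r, lWt a r -> lRd a r.
Hypothesis wb : forall r, lWt b r -> lRd b r.
Hypothesis sa : stepn a na A A'.
Hypothesis sb : stepn b nb A A''.

Lemma ff_ab : Some (lpid a, na) <> Some (lpid b, nb).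
Proof. by case=> /hp. Qed.

Lemma ff_e3 x y : edge (union A' A'') x y -> edge A' x y \/ edge A'' x y.
Proof. case=> r /= h; [case: h => [[h|h]|[h|h]]]; by [left; exists r; tauto | right; exists r; tauto]. Qed.

Lemma ff_mixed v' v'' r v : (ER A' v' r v \/ EW A' v' r v) ->
  (ER A'' v'' r v \/ EW A'' v'' r v) -> v' = v''.
Proof.
move=> h1 h2.
case: (st_E_back sa _ _ _ h1) => [o1|e1].
  exact: (ad_uniq (st_ad2 sb) _ _ _ _ (st_E_old sb _ _ _ o1) h2).
case: (st_E_back sb _ _ _ h2) => [o2|e2].
  exact: (ad_uniq (st_ad2 sa) _ _ _ _ h1 (st_E_old sa _ _ _ o2)).
by case: ff_ab; rewrite -e1 -e2.
Qed.

Lemma ff_ad : is_annDAG (union A' A'').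
Proof.
have a1 := st_ad2 sa; have a2 := st_ad2 sb; have a0 := st_ad1 sa.
split.
  have [s1 h1] := ad_fin a1; have [s2 h2] := ad_fin a2.
  by exists (s1 ++ s2) => v /= [/h1|/h2]; rewrite mem_cat => ->; rewrite ?orbT.
split; first by left; apply: ad_None.
split; first by move=> p k /= [/(ad_pid a1)|/(ad_pid a2)].
split.
  move=> p k k' /= [h|h] le; [left; exact: (ad_dc a1 _ _ _ h)|right; exact: (ad_dc a2 _ _ _ h)].
split.
  move=> x r y /= h.
  have : (ER A' x r y \/ EW A' x r y) \/ (ER A'' x r y \/ EW A'' x r y) by tauto.
  by case=> [/(ad_end a1)|/(ad_end a2)]; tauto.
split.
  move=> v' v'' r v /= h1 h2.
  have : (ER A' v' r v \/ EW A' v' r v) \/ (ER A'' v' r v \/ EW A'' v' r v) by tauto.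
  have : (ER A' v'' r v \/ EW A' v'' r v) \/ (ER A'' v'' r v \/ EW A'' v'' r v) by tauto.
  case=> g2; case=> g1;
  first [exact: (ad_uniq a1 _ _ _ _ g1 g2) | exact: (ad_uniq a2 _ _ _ _ g1 g2)
        | exact: (ff_mixed _ _ _ _ g1 g2) | symmetry; exact: (ff_mixed _ _ _ _ g2 g1)].
split.
  move=> x r y /= [[h1|h1] [h2|h2]].
  - exact: (ad_disj a1 x r y).
  - case/(st_ER sa): (h1) => [o1|[e1 _]]; first exact: (ad_disj a2 x r y (conj (st_ER_old sb o1) h2)).
    case/(st_EW sb): (h2) => [o2|[e2 _]]; first exact: (ad_disj a1 x r y (conj h1 (st_EW_old sa o2))).
    by case: ff_ab; rewrite -e1 -e2.
  - case/(st_ER sb): (h1) => [o1|[e1 _]]; first exact: (ad_disj a1 x r y (conj (st_ER_old sa o1) h2)).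
    case/(st_EW sa): (h2) => [o2|[e2 _]]; first exact: (ad_disj a2 x r y (conj h1 (st_EW_old sb o2))).
    by case: ff_ab; rewrite -e1 -e2.
  - exact: (ad_disj a2 x r y).
split.
  have claim : forall x y, clos_trans node (edge (union A' A'')) x y ->
      y <> Some (lpid a, na) -> y <> Some (lpid b, nb) -> clos_trans node (edge A) x y.
    move=> x y; elim=> [u w e hw1 hw2|u z w _ IH1 _ IH2 hw1 hw2].
      apply: t_step; case: (ff_e3 _ _ e) => e'; [exact: (st_tgt_old sa e')|exact: (st_tgt_old sb e')].
    have ct2 := IH2 hw1 hw2.
    have [w' ew'] := ct_first ct2.
    case: (ew') => r hr; have [vz _] := ad_end a0 _ _ _ hr.
    apply: t_trans (IH1 _ _) ct2.
      by move=> ez; apply: (st_fresh sa); rewrite -ez.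
    by move=> ez; apply: (st_fresh sb); rewrite -ez.
  move=> x cx.
  have [w ew] := ct_first cx.
  have vx : V A x by case: (ff_e3 _ _ ew) => e'; [exact: (st_src_old sa e')|exact: (st_src_old sb e')].
  apply: (ad_acyc a0 x); apply: (claim _ _ cx).
    by move=> ez; apply: (st_fresh sa); rewrite -ez.
  by move=> ez; apply: (st_fresh sb); rewrite -ez.
split.
  move=> v' r v /= [h|h] hn.
    by have [w hw] := ad_4 a1 _ _ _ h hn; exists w; left.
  by have [w hw] := ad_4 a2 _ _ _ h hn; exists w; right.
move=> v r v' v'' /= [h1|h1] [h2|h2].
- exact: (ad_5 a1 _ _ _ _ h1 h2).
- case/(st_EW sa): (h1) => [o1|[_ [ta _]]]; first exact: (ad_5 a2 _ _ _ _ (st_EW_old sb o1) h2).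
  case/(st_EW sb): (h2) => [o2|[_ [tb _]]]; first exact: (ad_5 a1 _ _ _ _ h1 (st_EW_old sa o2)).
  by case: (hba _ (wb _ tb)).
- case/(st_EW sb): (h1) => [o1|[_ [tb _]]]; first exact: (ad_5 a1 _ _ _ _ (st_EW_old sa o1) h2).
  case/(st_EW sa): (h2) => [o2|[_ [ta _]]]; first exact: (ad_5 a2 _ _ _ _ h1 (st_EW_old sb o2)).
  by case: (hba _ (wb _ tb)).
- exact: (ad_5 a2 _ _ _ _ h1 h2).
Qed.

Lemma ff_half (A3 : annDAG R) : is_annDAG A3 ->
  (forall x, V A3 x <-> V A' x \/ V A'' x) ->
  (forall x r y, ER A3 x r y <-> ER A' x r y \/ ER A'' x r y) ->
  (forall x r y, EW A3 x r y <-> EW A' x r y \/ EW A'' x r y) ->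
  ann_step b A' A3.
Proof.
move=> ad3 HV HER HEW; apply/stepnP; exists nb.
split; first exact: st_ad2 sa.
split; first exact: ad3.
split.
  apply: new_index_ext (st_ni sb) => k; rewrite (st_Vpid sa) //.
  by move=> e; apply: hp; rewrite e.
split.
  move=> x; rewrite HV (st_V sb); have := @st_V_old _ _ _ _ sa x; tauto.
split.
  move=> x r y; rewrite HER (st_ER sb); have := @st_ER_old _ _ _ _ sa x r y.
  have : lRd b r -> (is_last (EW A) r x <-> is_last (EW A') r x).
    by move=> h; apply: last_keep sa _; apply: hba.
  tauto.
move=> x r y; rewrite HEW (st_EW sb); have := @st_EW_old _ _ _ _ sa x r y.
have : lWt b r -> (is_last (EW A) r x <-> is_last (EW A') r x).
  by move=> h; apply: last_keep sa _; apply: hba; apply: wb.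
tauto.
Qed.

End FF.

Lemma ff_main a b na nb (A A' A'' : annDAG R) :
  lpid a <> lpid b ->
  (forall r, lRd a r -> ~ lWt b r) -> (forall r, lRd b r -> ~ lWt a r) ->
  (forall r, lWt a r -> lRd a r) -> (forall r, lWt b r -> lRd b r) ->
  stepn a na A A' -> stepn b nb A A'' ->
  exists A3, ann_step b A' A3 /\ ann_step a A'' A3.
Proof.
move=> hp hab hba wa wb sa sb.
have ad := ff_ad hp hba wb sa sb.
exists (union A' A''); split.
  apply: (ff_half hp hba wb sa sb _ ad) => /= *; tauto.
have hp' : lpid b <> lpid a by move=> e; apply: hp.
apply: (ff_half hp' hab wa sb sa _ ad) => /= *; tauto.
Qed.


Definition inter (A1 A2 : annDAG R) : annDAG R :=
  AnnDAG (fun x => V A1 x /\ V A2 x) (fun x r y => ER A1 x r y /\ ER A2 x r y)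
         (fun x r y => EW A1 x r y /\ EW A2 x r y).

Section BB.
Context {a b : lab R} {na nb : nat} {A A' A'' : annDAG R}.
Hypothesis hp : lpid a <> lpid b.
Hypothesis hab : forall r, lRd a r -> ~ lWt b r.
Hypothesis hba : forall r, lRd b r -> ~ lWt a r.
Hypothesis wa : forall r, lWt a r -> lRd a r.
Hypothesis wb : forall r, lWt b r -> lRd b r.
Hypothesis sa : stepn a na A' A.
Hypothesis sb : stepn b nb A'' A.

Lemma bb_ad : is_annDAG (inter A' A'').
Proof.
have a1 := st_ad1 sa; have a2 := st_ad1 sb; have a0 := st_ad2 sa.
split.
  have [s1 h1] := ad_fin a1.
  by exists s1 => v /= [/h1].
split; first by split; apply: ad_None.
split; first by move=> p k /= [/(ad_pid a1)].
split.
  move=> p k k' /= [h1 h2] le; split; [exact: (ad_dc a1 _ _ _ h1)|exact: (ad_dc a2 _ _ _ h2)].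
split.
  move=> x r y /= h.
  have := ad_end a1 x r y; have := ad_end a2 x r y; tauto.
split.
  move=> v' v'' r v /= h1 h2; apply: (ad_uniq a1 v' v'' r v); tauto.
split.
  move=> x r y /= h; apply: (ad_disj a1 x r y); tauto.
split.
  move=> x cx; apply: (ad_acyc a1 x); apply: ct_mono cx.
  by move=> u w [r /= hr]; exists r; tauto.
split.
  move=> v' r v /= [h h'] hn.
  have [w hw] := ad_4 a1 _ _ _ h hn; exists w; split=> //.
  have [vv' _] := ad_end a2 _ _ _ (or_intror h').
  case/(st_EW sb): (st_EW_old sa hw) => [//|[e _]].
  by case: (st_fresh sb); rewrite -e.
move=> v r v' v'' /= [h1 _] [h2 _]; exact: (ad_5 a1 _ _ _ _ h1 h2).
Qed.

Lemma bb_half (A3 : annDAG R) : is_annDAG A3 ->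
  (forall x, V A3 x <-> V A' x /\ V A'' x) ->
  (forall x r y, ER A3 x r y <-> ER A' x r y /\ ER A'' x r y) ->
  (forall x r y, EW A3 x r y <-> EW A' x r y /\ EW A'' x r y) ->
  ann_step b A3 A'.
Proof.
move=> ad3 HV HER HEW; apply/stepnP; exists nb.
split; first exact: ad3.
split; first exact: st_ad1 sa.
have hp' : lpid b <> lpid a by move=> e; apply: hp.
split.
  apply: new_index_ext (st_ni sb) => k; rewrite HV.
  have : V A'' (Some (lpid b, k)) -> V A' (Some (lpid b, k)).
    by move/(st_V_old sb)/(st_Vpid sa _ _ hp').
  tauto.
have hvb : V A' (Some (lpid b, nb)).
  case/(st_V sa): (st_V_new sb) => // e; exfalso; apply: hp'; by case: e.
split.
  move=> x; rewrite HV.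
  have : V A' x -> V A'' x \/ x = Some (lpid b, nb) by move/(st_V_old sa)/(st_V sb).
  have : x = Some (lpid b, nb) -> V A' x by move->.
  tauto.
have keep r : ~ lWt a r -> forall x, (is_last (EW A'') r x <-> is_last (EW A3) r x).
  move=> h x; split; apply: is_last_ext => x' y'; rewrite HEW;
  have := @st_EW_old _ _ _ _ sb x' r y'; rewrite (st_EWkeep sa _ _ _ h); tauto.
have back y : y <> Some (lpid a, na) -> forall x r, (ER A x r y -> ER A' x r y) /\ (EW A x r y -> EW A' x r y).
  move=> hy x r; split.
    by case/(st_ER sa) => // [[e _]].
  by case/(st_EW sa) => // [[e _]].
have vbva : Some (lpid b, nb) <> Some (lpid a, na) by case=> /hp'.
split.
  move=> x r y; rewrite HER.
  have : ER A' x r y -> ER A'' x r y \/ (y = Some (lpid b, nb) /\ lRd b r /\ ~ lWt b r /\ is_last (EW A'') r x).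
    by move/(st_ER_old sa)/(st_ER sb).
  have : y = Some (lpid b, nb) -> lRd b r -> ~ lWt b r -> is_last (EW A'') r x -> ER A' x r y.
    move=> -> h1 h2 h3; apply: (proj1 (back _ vbva x r)); apply/(st_ER sb); right; tauto.
  have : lRd b r -> (is_last (EW A'') r x <-> is_last (EW A3) r x).
    by move=> h; apply: keep; apply: hba.
  tauto.
move=> x r y; rewrite HEW.
have : EW A' x r y -> EW A'' x r y \/ (y = Some (lpid b, nb) /\ lWt b r /\ is_last (EW A'') r x).
  by move/(st_EW_old sa)/(st_EW sb).
have : y = Some (lpid b, nb) -> lWt b r -> is_last (EW A'') r x -> EW A' x r y.
  move=> -> h1 h3; apply: (proj2 (back _ vbva x r)); apply/(st_EW sb); right; tauto.
have : lWt b r -> (is_last (EW A'') r x <-> is_last (EW A3) r x).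
  by move=> h; apply: keep; apply: hba; apply: wb.
tauto.
Qed.

End BB.

Lemma bb_main a b na nb (A A' A'' : annDAG R) :
  lpid a <> lpid b ->
  (forall r, lRd a r -> ~ lWt b r) -> (forall r, lRd b r -> ~ lWt a r) ->
  (forall r, lWt a r -> lRd a r) -> (forall r, lWt b r -> lRd b r) ->
  stepn a na A' A -> stepn b nb A'' A ->
  exists A3, ann_step b A3 A' /\ ann_step a A3 A''.
Proof.
move=> hp hab hba wa wb sa sb.
have ad := bb_ad sa sb.
exists (inter A' A''); split.
  apply: (bb_half hp hba wb sa sb _ ad) => /= *; tauto.
have hp' : lpid b <> lpid a by move=> e; apply: hp.
apply: (bb_half hp' hab wa sb sa _ ad) => /= *; tauto.
Qed.


Definition ext (a : lab R) (n : nat) (A1 : annDAG R) : annDAG R :=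
  AnnDAG (fun x => V A1 x \/ x = Some (lpid a, n))
    (fun x r y => ER A1 x r y \/
      (y = Some (lpid a, n) /\ lRd a r /\ ~ lWt a r /\ is_last (EW A1) r x))
    (fun x r y => EW A1 x r y \/
      (y = Some (lpid a, n) /\ lWt a r /\ is_last (EW A1) r x)).

Section MX.
Context {a b : lab R} {na nb : nat} {A A' A'' : annDAG R}.
Hypothesis hp : lpid a <> lpid b.
Hypothesis hab : forall r, lRd a r -> ~ lWt b r.
Hypothesis hba : forall r, lRd b r -> ~ lWt a r.
Hypothesis wa : forall r, lWt a r -> lRd a r.
Hypothesis wb : forall r, lWt b r -> lRd b r.
Hypothesis sa : stepn a na A A'.
Hypothesis sb : stepn b nb A'' A.

Let A3 := ext a na A''.

Lemma mx_keepA r x : lRd a r -> (is_last (EW A'') r x <-> is_last (EW A) r x).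
Proof. by move=> h; apply: last_keep sb _; apply: hab. Qed.

Lemma mx_subV x : V A3 x -> V A' x.
Proof. rewrite /A3 /=. case=> [h|->]. apply: (st_V_old sa). apply: (st_V_old sb). exact: h. exact: st_V_new sa. Qed.

Lemma mx_subER x r y : ER A3 x r y -> ER A' x r y.
Proof.
case=> [h|[-> [h1 [h2 h3]]]]; first by apply: (st_ER_old sa); apply: (st_ER_old sb).
apply/(st_ER sa); right; split=> //; split=> //; split=> //; exact/mx_keepA.
Qed.

Lemma mx_subEW x r y : EW A3 x r y -> EW A' x r y.
Proof.
case=> [h|[-> [h1 h3]]]; first by apply: (st_EW_old sa); apply: (st_EW_old sb).
apply/(st_EW sa); right; split=> //; split=> //; apply/mx_keepA=> //; exact: wa.
Qed.

Lemma mx_ad : is_annDAG A3.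
Proof.
have a1 := st_ad2 sa; have a2 := st_ad1 sb; have a0 := st_ad1 sa.
split.
  have [s1 h1] := ad_fin a1.
  by exists s1 => v /mx_subV /h1.
split; first by left; apply: ad_None.
split; first by move=> p k /mx_subV /(ad_pid a1).
split.
  move=> p k k' /= [h|e] le; first by left; exact: (ad_dc a2 _ _ _ h).
  case: e => ep ek; subst p k.
  case: (ltngtP k' na) => [lt||->]; last by right.
    2: by move=> gt; rewrite leqNgt gt in le.
  left; case: (st_ni sa) => [[e _]|[m [e [hm _]]]]; first by rewrite e in lt.
  subst na.
  have : V A (Some (lpid a, k')) by apply: (ad_dc a0 _ _ _ hm); rewrite -ltnS.
  case/(st_V sb) => // e; exfalso; apply: hp; by case: e.
split.
  move=> x r y /= h.
  have vx : is_last (EW A'') r x -> V A'' x.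
    case/is_last_src => [->|[z hz]]; first exact: ad_None.
    by have [] := ad_end a2 _ _ _ (or_intror hz).
  have := ad_end a2 x r y; tauto.
split.
  move=> v' v'' r v h1 h2; apply: (ad_uniq a1 v' v'' r v).
    by case: h1 => [/mx_subER|/mx_subEW]; tauto.
  by case: h2 => [/mx_subER|/mx_subEW]; tauto.
split.
  move=> x r y [/mx_subER h1 /mx_subEW h2]; exact: (ad_disj a1 x r y).
split.
  move=> x cx; apply: (ad_acyc a1 x); apply: ct_mono cx.
  move=> u w [r hr]; exists r.
  by case: hr => [/mx_subER|/mx_subEW]; tauto.
split.
  move=> v' r v /= [h|[_ [_ hl]]] hn.
    by have [w hw] := ad_4 a2 _ _ _ h hn; exists w; left.
  case/is_last_src: hl => [//|[z hz]]; by exists z; left.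
move=> v r v' v'' /mx_subEW h1 /mx_subEW h2; exact: (ad_5 a1 _ _ _ _ h1 h2).
Qed.

Lemma mx_step1 : ann_step a A'' A3.
Proof.
apply/stepnP; exists na.
split; first exact: st_ad1 sb.
split; first exact: mx_ad.
split.
  apply: new_index_ext (st_ni sa) => k; exact: (st_Vpid sb _ _ hp).
split; first by move=> *; exact: iff_refl.
split; by move=> *; exact: iff_refl.
Qed.

Lemma mx_step2 : ann_step b A3 A'.
Proof.
have hp' : lpid b <> lpid a by move=> e; apply: hp.
apply/stepnP; exists nb.
split; first exact: mx_ad.
split; first exact: st_ad2 sa.
split.
  apply: new_index_ext (st_ni sb) => k /=.
  have : Some (lpid b, k) <> Some (lpid a, na) by case=> /hp'.
  tauto.
split.
  move=> x /=; rewrite (st_V sa) (st_V sb); tauto.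
have keepB r x : ~ lWt a r -> (is_last (EW A'') r x <-> is_last (EW A3) r x).
  move=> h; split; apply: is_last_ext => x' y' /=; tauto.
split.
  move=> x r y /=; rewrite (st_ER sa) (st_ER sb).
  have := mx_keepA r x; have := keepB r x; have := hba r; tauto.
move=> x r y /=; rewrite (st_EW sa) (st_EW sb).
have := mx_keepA r x; have := keepB r x; have := hba r; have := wa r; have := wb r; tauto.
Qed.

End MX.

Lemma mx_main a b na nb (A A' A'' : annDAG R) :
  lpid a <> lpid b ->
  (forall r, lRd a r -> ~ lWt b r) -> (forall r, lRd b r -> ~ lWt a r) ->
  (forall r, lWt a r -> lRd a r) -> (forall r, lWt b r -> lRd b r) ->
  stepn a na A A' -> stepn b nb A'' A ->
  exists A3, ann_step b A3 A' /\ ann_step a A'' A3.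
Proof.
move=> hp hab hba wa wb sa sb.
exists (ext a na A''); split.
  exact: (mx_step2 hp hab hba wa wb sa sb).
exact: (mx_step1 hp hab wa sa sb).
Qed.

End S.

Theorem mainTheorem6 (R : Type) (alpha beta : glab R) (A A' A'' : annDAG R) :
  is_pid (lpid (und alpha)) -> is_pid (lpid (und beta)) ->
  (forall r, lWt (und alpha) r -> lRd (und alpha) r) ->
  (forall r, lWt (und beta) r -> lRd (und beta) r) ->
  iota_lab alpha beta ->
  gstep alpha A A' -> gstep beta A A'' ->
  exists A''' : annDAG R, gstep beta A' A''' /\ gstep alpha A'' A'''.
Proof.
move=> _ _ wa wb [np1 [np2 [d1 d2]]].
have hp : lpid (und alpha) <> lpid (und beta).
  by move=> e; apply: np1; rewrite e; apply: prefix_refl.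
have hab : forall r, lRd (und alpha) r -> ~ lWt (und beta) r by move=> r h1 h2; apply: (d1 r).
have hba : forall r, lRd (und beta) r -> ~ lWt (und alpha) r by move=> r h1 h2; apply: (d2 r).
have hp' : lpid (und beta) <> lpid (und alpha) by move=> e; apply: hp.
clear np1 np2 d1 d2.
case: alpha wa hp hab hba hp' => a wa hp hab hba hp';
case: beta wb hp hab hba hp' => b wb hp hab hba hp' /=
  /stepnP [na sa] /stepnP [nb sb] /=.
all: simpl in *.
- exact: (ff_main _ _ _ _ _ _ _ _ hp hab hba wa wb sa sb).
- exact: (mx_main _ _ _ _ _ _ _ _ hp hab hba wa wb sa sb).
- have [A3 [h1 h2]] := mx_main _ _ _ _ _ _ _ _ hp' hba hab wb wa sb sa.
  by exists A3.
- exact: (bb_main _ _ _ _ _ _ _ _ hp hab hba wa wb sa sb).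
Qed.
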